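(* Let $p$ be a prime and $G$ a $p$-group containing a normal abelian subgroup $A$ such that $C_G(A)$ has finite index in $G$. Assume that $A$ contains a $G$-invariant divisible Chernikov subgroup $D$. Then $A$ contains a $G$-invariant subgroup $S$ such that $A=SD$ and $S\cap D$ is finite. *)

(* Defs.v *)
(* Possibly infinite groups, given as an explicit carrier with operations.
   Subgroups are predicates on the carrier (T -> Prop). *)
From mathcomp Require Import all_boot.

Set Implicit Arguments.
Unset Strict Implicit.
Unset Printing Implicit Defensive.

Record Grp := {
  gT :> Type;
  gmul : gT -> gT -> gT;
  gone : gT;
  ginv : gT -> gT;
  gmulA : forall x y z, gmul x (gmul y z) = gmul (gmul x y) z;
  gmul1 : forall x, gmul gone x = x;
  gmulV : forall x, gmul (ginv x) x = gone
}.

Section Defs.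
Variable G : Grp.
Local Notation T := (gT G).
Local Notation "x * y" := (gmul x y).
Local Notation e := (@gone G).

Fixpoint gexp (x : T) (n : nat) : T :=
  match n with 0 => e | n'.+1 => gexp x n' * x end.

Fixpoint gprod (f : nat -> T) (m : nat) : T :=
  match m with 0 => e | m'.+1 => gprod f m' * f m' end.

Definition subgroup (H : T -> Prop) : Prop :=
  H e /\ (forall x y, H x -> H y -> H (x * y)) /\ (forall x, H x -> H (ginv x)).

Definition sub_set (H K : T -> Prop) : Prop := forall x, H x -> K x.

Definition normal (H : T -> Prop) : Prop :=
  forall g h, H h -> H (ginv g * (h * g)).

Definition abelian (H : T -> Prop) : Prop :=
  forall x y, H x -> H y -> x * y = y * x.

Definition p_group (p : nat) : Prop :=
  forall g : T, exists k, gexp g (p ^ k) = e.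

Definition centralizer (A : T -> Prop) : T -> Prop :=
  fun g => forall a, A a -> g * a = a * g.

Definition finite_set (X : T -> Prop) : Prop :=
  exists n (f : nat -> T), forall x, X x -> exists2 i, i < n & x = f i.

Definition finite_index_in (K H : T -> Prop) : Prop :=
  exists n (t : nat -> T), (forall i, i < n -> H (t i)) /\
    forall h, H h -> exists2 i, i < n & K (ginv (t i) * h).

Definition divisible (D : T -> Prop) : Prop :=
  forall d n, D d -> 0 < n -> exists2 e, D e & gexp e n = d.

Definition quasicyclic (P : T -> Prop) : Prop :=
  exists q (x : nat -> T), prime q /\ x 0 = e /\ x 1 <> e /\
    (forall n, gexp (x n.+1) q = x n) /\
    (forall g, P g <-> exists n k, g = gexp (x n) k).

Definition direct_product (H : T -> Prop) (P : nat -> T -> Prop) (m : nat) : Prop :=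
  (forall i, i < m -> subgroup (P i)) /\
  (forall i j x y, i < m -> j < m -> i <> j -> P i x -> P j y -> x * y = y * x) /\
  (forall g, H g <-> exists f : nat -> T,
       (forall i, i < m -> P i (f i)) /\ g = gprod f m) /\
  (forall f f' : nat -> T, (forall i, i < m -> P i (f i)) ->
       (forall i, i < m -> P i (f' i)) -> gprod f m = gprod f' m ->
       forall i, i < m -> f i = f' i).

Definition chernikov (H : T -> Prop) : Prop :=
  subgroup H /\
  exists K : T -> Prop, subgroup K /\ sub_set K H /\
    (forall h k, H h -> K k -> K (ginv h * (k * h))) /\
    finite_index_in K H /\
    exists (m : nat) (P : nat -> T -> Prop),
      (forall i, i < m -> quasicyclic (P i)) /\ direct_product K P m.

End Defs.

(* Main.v *)
Require Import Defs.
From mathcomp Require Import all_boot.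
From HB Require Import structures.
From mathcomp Require Import boolp classical_sets.
From Stdlib Require Import Classical ProofIrrelevance.
Set Implicit Arguments.
Unset Strict Implicit.
Unset Printing Implicit Defensive.


Section Basics.
Variable G : Grp.
Local Notation "x * y" := (@gmul G x y).
Local Notation e := (@gone G).
Local Notation inv := (@ginv G).

Lemma GmulgV (x : G) : x * inv x = e.
Proof.
have h := gmulV (inv x).
rewrite -[x * inv x]gmul1 -h -gmulA [inv x * (x * inv x)]gmulA gmulV gmul1.
by rewrite h.
Qed.

Lemma Gmulg1 (x : G) : x * e = x.
Proof. by rewrite -(gmulV x) gmulA GmulgV gmul1. Qed.

Lemma GmulKg (x y : G) : inv x * (x * y) = y.
Proof. by rewrite gmulA gmulV gmul1. Qed.

Lemma GmulgK (x y : G) : (y * x) * inv x = y.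
Proof. by rewrite -gmulA GmulgV Gmulg1. Qed.

Lemma GmulKVg (x y : G) : x * (inv x * y) = y.
Proof. by rewrite gmulA GmulgV gmul1. Qed.

Lemma GmulgKV (x y : G) : (y * inv x) * x = y.
Proof. by rewrite -gmulA gmulV Gmulg1. Qed.

Lemma Ginv_uniq (x y : G) : x * y = e -> y = inv x.
Proof. by move=> h; rewrite -[y](GmulKg x) h Gmulg1. Qed.

Lemma GinvgK (x : G) : inv (inv x) = x.
Proof. by symmetry; apply: Ginv_uniq; rewrite gmulV. Qed.

Lemma GinvMg (x y : G) : inv (x * y) = inv y * inv x.
Proof.
by symmetry; apply: Ginv_uniq; rewrite -gmulA [y * (inv y * inv x)]gmulA GmulgV gmul1 GmulgV.
Qed.

Lemma Ginv1 : inv e = e.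
Proof. by symmetry; apply: Ginv_uniq; rewrite gmul1. Qed.

Lemma Gmulg_cancl (x y z : G) : x * y = x * z -> y = z.
Proof. by move=> h; rewrite -[y](GmulKg x) h GmulKg. Qed.

Lemma Gmulg_cancr (x y z : G) : y * x = z * x -> y = z.
Proof. by move=> h; rewrite -[y](GmulgK x) h GmulgK. Qed.

Lemma gexpS (x : G) n : gexp x n.+1 = gexp x n * x.
Proof. by []. Qed.

Lemma gexp0 (x : G) : gexp x 0 = e.
Proof. by []. Qed.

Lemma gexp1 (x : G) : gexp x 1 = x.
Proof. by rewrite /= gmul1. Qed.

Lemma gexpD (x : G) m n : gexp x (m + n) = gexp x m * gexp x n.
Proof.
elim: n => [|n IH]; first by rewrite addn0 Gmulg1.
by rewrite addnS /= IH gmulA.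
Qed.

Lemma gexpSl (x : G) n : gexp x n.+1 = x * gexp x n.
Proof. by rewrite -addn1 addnC gexpD gexp1. Qed.

Lemma gexpM (x : G) m n : gexp x (m * n) = gexp (gexp x m) n.
Proof.
elim: n => [|n IH]; first by rewrite muln0.
by rewrite mulnS gexpD IH /= -gexpSl /=.
Qed.

Lemma gexp1g n : gexp e n = e.
Proof. by elim: n => //= n ->; rewrite gmul1. Qed.

Lemma gexp_comm (x y : G) n : x * y = y * x -> gexp x n * y = y * gexp x n.
Proof.
move=> h; elim: n => [|n IH] /=; first by rewrite gmul1 Gmulg1.
by rewrite -gmulA h gmulA IH gmulA.
Qed.

Lemma gexpMn (x y : G) n : x * y = y * x -> gexp (x * y) n = gexp x n * gexp y n.
Proof.
move=> h; elim: n => [|n IH] /=; first by rewrite gmul1.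
rewrite IH -!gmulA; congr (_ * _).
rewrite [gexp y n * (x * y)]gmulA.
have hc : gexp y n * x = x * gexp y n by apply: gexp_comm.
by rewrite hc gmulA.
Qed.

Lemma gexpV (x : G) n : gexp (inv x) n = inv (gexp x n).
Proof.
apply: Ginv_uniq; rewrite -gexpMn ?GmulgV ?gmulV ?gexp1g //.
Qed.

Lemma subgroup1 (H : G -> Prop) : subgroup H -> H e.
Proof. by case. Qed.
Lemma subgroupM (H : G -> Prop) x y : subgroup H -> H x -> H y -> H (x * y).
Proof. by case=> _ [h _]; apply: h. Qed.
Lemma subgroupV (H : G -> Prop) x : subgroup H -> H x -> H (inv x).
Proof. by case=> _ [_ h]; apply: h. Qed.
Lemma subgroupX (H : G -> Prop) x n : subgroup H -> H x -> H (gexp x n).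
Proof.
move=> sH hx; elim: n => [|n IH] /=; first exact: subgroup1.
exact: subgroupM.
Qed.
Lemma subgroupVr (H : G -> Prop) x : subgroup H -> H (inv x) -> H x.
Proof. by move=> sH /(subgroupV sH); rewrite GinvgK. Qed.

End Basics.


Lemma last_false (Q : nat -> Prop) j : ~ Q 0 -> Q j -> exists i, ~ Q i /\ Q i.+1.
Proof.
move=> h0; elim: j => [|j IH] hj; first by [].
case: (classic (Q j)) => hq; first exact: IH.
by exists j.
Qed.

Section Compl.
Local Open Scope classical_set_scope.
Variables (G : Grp) (p : nat) (A D : G -> Prop).
Local Notation "x * y" := (@gmul G x y).
Local Notation e := (@gone G).
Local Notation inv := (@ginv G).
Hypotheses (pr : prime p) (pg : p_group G p) (sA : subgroup A) (abA : abelian A)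
  (sD : subgroup D) (DA : sub_set D A) (divD : divisible D).

Lemma exists_compl : exists S : G -> Prop, subgroup S /\ sub_set S A /\
  (forall x, S x -> D x -> x = e) /\
  (forall a, A a -> exists s d, S s /\ D d /\ a = s * d).
Proof.
pose P := fun X : G -> Prop => sub_set X A /\ (forall x, X x -> D x -> x = e) /\
  (forall x y, X x -> X y -> X (x * y)) /\ (forall x, X x -> X (inv x)).
have [S0 [PS0 maxS0]] : exists S0, P S0 /\ forall B, S0 `<` B -> ~ P B.
  apply: Zorn_bigcup => F FP Ftot; split; [|split; [|split]].
  - by move=> x [X /FP [h _] Xx]; apply: h.
  - by move=> x [X /FP [_ [h _]] Xx]; apply: h.
  - move=> x y [X FX Xx] [Y FY Yy].
    have [XY|YX] := Ftot X Y FX FY.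
    + exists Y => //; have [_ [_ [h _]]] := FP Y FY; exact: h (XY _ Xx) Yy.
    + exists X => //; have [_ [_ [h _]]] := FP X FX; exact: h Xx (YX _ Yy).
  - by move=> x [X FX Xx]; exists X => //; have [_ [_ [_ h]]] := FP X FX; apply: h.
have [S0A [S0D [S0M S0V]]] := PS0.
have S0e : S0 e.
  apply: NNPP => ne.
  apply: (maxS0 (fun x => S0 x \/ x = e)).
    split; first by move=> x hx; left.
    by move=> h; apply: ne; apply: (h e (or_intror erefl)).
  split; [|split; [|split]].
  - move=> x [/S0A //| ->]; exact: subgroup1.
  - by move=> x [hx hd|->]; [apply: S0D|].
  - move=> x y [hx|->] [hy|->]; rewrite /= ?gmul1 ?Gmulg1.
    + by left; apply: S0M.
    + by left.
    + by left.
    + by right.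
  - by move=> x [hx|->]; [left; apply: S0V|right; rewrite Ginv1].
have sS : subgroup S0 by [].
exists S0; split => //; split => //; split => //.
pose SD := fun x => exists s d, S0 s /\ D d /\ x = s * d.
have SDA : sub_set SD A.
  by move=> x [s [d [hs [hd ->]]]]; apply: subgroupM => //; [apply: S0A|apply: DA].
have sSD : subgroup SD.
  split; [|split].
  - by exists e, e; rewrite gmul1; split => //; split => //; apply: subgroup1.
  - move=> x y [s [d [hs [hd ->]]]] [s' [d' [hs' [hd' ->]]]].
    exists (s * s'), (d * d'); split; first exact: S0M.
    split; first exact: subgroupM.
    rewrite -!gmulA; congr (_ * _); rewrite !gmulA; congr (_ * _).
    by apply: abA; [apply: DA|apply: S0A].
  - move=> x [s [d [hs [hd ->]]]]; exists (inv s), (inv d); split; first exact: S0V.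
    split; first exact: subgroupV.
    rewrite GinvMg; apply: abA; [apply: subgroupV => //; exact: DA|].
    by apply: subgroupV => //; exact: S0A.
move=> a Aa; apply: NNPP => na.
have [j hj] := pg a.
have [i [ni si]] : exists i, ~ SD (gexp a (p ^ i)) /\ SD (gexp a (p ^ i.+1)).
  apply: (last_false (j := j)); first by rewrite expn0 gexp1.
  by rewrite hj; apply: subgroup1.
set a' := gexp a (p ^ i).
have Aa' : A a' by apply: subgroupX.
have ha'p : gexp a' p = gexp a (p ^ i.+1) by rewrite /a' -gexpM -expnSr.
have [s [d [hs [hd hsd]]]] := si.
have [c Dc hc] := divD hd (prime_gt0 pr).
have Ac : A c by apply: DA.
set b := a' * inv c.
have Ab : A b by apply: subgroupM => //; apply: subgroupV.
have bp : gexp b p = s.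
  rewrite /b gexpMn; last by apply: abA => //; apply: subgroupV.
  by rewrite gexpV hc ha'p hsd -gmulA GmulgV Gmulg1.
have SDc : SD c by exists e, c; rewrite gmul1.
have nb : ~ SD b.
  move=> hb; apply: ni.
  have -> : gexp a (p ^ i) = b * c by rewrite /b GmulgKV.
  exact: subgroupM.
have S0SD : forall x, S0 x -> SD x.
  by move=> x hx; exists x, e; rewrite Gmulg1; split => //; split => //; apply: subgroup1.
have [m hm] := pg b.
have pm0 : 0 < p ^ m by rewrite expn_gt0 prime_gt0.
have invb : forall k, inv (gexp b k) = gexp b (k * (p ^ m).-1).
  move=> k; symmetry; apply: Ginv_uniq; rewrite -gexpD -{1}(muln1 k) -mulnDr.
  by rewrite add1n prednK // mulnC gexpM hm gexp1g.
have Abk : forall k, A (gexp b k) by move=> k; apply: subgroupX.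
pose B := fun x => exists s k, S0 s /\ x = s * gexp b k.
apply: (maxS0 B).
  split; first by move=> x hx; exists x, 0; rewrite /= Gmulg1.
  move=> h; apply: nb; apply: S0SD; apply: h.
  by exists e, 1; rewrite gexp1 gmul1.
split; [|split; [|split]].
- by move=> x [s' [k [hs' ->]]]; apply: subgroupM => //; apply: S0A.
- move=> x [s' [k [hs' hx]]] Dx.
  move: hx; rewrite (divn_eq k p) gexpD mulnC gexpM bp gmulA => hx.
  have hs1 : S0 (s' * gexp s (k %/ p)) by apply: S0M => //; apply: subgroupX.
  move: hx; set s1 := s' * gexp s (k %/ p); set r0 := k %% p => hx.
  case: (posnP r0) => [r00|r0pos].
    move: hx; rewrite r00 /= Gmulg1 => hx; rewrite hx; apply: S0D => //; by rewrite -hx.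
  exfalso; apply: nb.
  have SDbr : SD (gexp b r0).
    have -> : gexp b r0 = inv s1 * x by rewrite hx GmulKg.
    apply: subgroupM => //; first by apply: S0SD; apply: S0V.
    by exists e, x; rewrite gmul1; split => //; split.
  have r0p : r0 < p by rewrite /r0 ltn_mod prime_gt0.
  have cop : coprime r0 p.
    rewrite coprime_sym prime_coprime //; apply/negP => /(dvdn_leq r0pos).
    by rewrite leqNgt r0p.
  have [u _ hu] := Bezoutl p r0pos.
  move: hu; rewrite (eqP cop) => /dvdnP [c' hc'].
  have -> : b = gexp b (1 + u * p) * inv (gexp s u).
    by rewrite gexpD gexp1 mulnC gexpM bp GmulgK.
  apply: subgroupM => //; last by apply: subgroupV => //; apply: S0SD; apply: subgroupX.
  by rewrite hc' mulnC gexpM; apply: subgroupX.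
- move=> x y [s1 [k1 [h1 ->]]] [s2 [k2 [h2 ->]]].
  exists (s1 * s2), (k1 + k2); split; first exact: S0M.
  rewrite gexpD -!gmulA; congr (_ * _); rewrite !gmulA; congr (_ * _).
  by apply: abA => //; apply: S0A.
- move=> x [s1 [k1 [h1 ->]]].
  exists (inv s1), (muln k1 (p ^ m).-1); split; first exact: S0V.
  rewrite GinvMg invb; apply: abA => //; apply: subgroupV => //; apply: S0A.
  done.
Qed.
End Compl.


Section Fin.
Variable G : Grp.
Local Notation "x * y" := (@gmul G x y).
Local Notation e := (@gone G).
Local Notation inv := (@ginv G).

Lemma fin_sub (X Y : G -> Prop) : finite_set Y -> (forall x, X x -> Y x) -> finite_set X.
Proof. by move=> [n [f hf]] h; exists n, f => x /h /hf. Qed.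

Lemma fin0 (X : G -> Prop) : (forall x, ~ X x) -> finite_set X.
Proof. by move=> h; exists 0, (fun _ => e) => x /h. Qed.

Lemma finU (X Y : G -> Prop) : finite_set X -> finite_set Y ->
  finite_set (fun x => X x \/ Y x).
Proof.
move=> [n1 [f1 h1]] [n2 [f2 h2]].
exists (n1 + n2), (fun i => if i < n1 then f1 i else f2 (i - n1)).
move=> x [/h1 [i hi ->]|/h2 [i hi ->]].
  by exists i; rewrite ?hi // ltn_addr.
exists (n1 + i); first by rewrite ltn_add2l.
by rewrite ltnNge leq_addr /= addKn.
Qed.

Lemma fin2 (X Y : G -> Prop) : finite_set X -> finite_set Y ->
  finite_set (fun z => exists x y, X x /\ Y y /\ z = x * y).
Proof.
move=> [n1 [f1 h1]] [n2 [f2 h2]].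
exists (muln n1 n2.+1), (fun i => f1 (i %/ n2.+1) * f2 (i %% n2.+1)).
move=> z [x [y [/h1 [a ha ->] [/h2 [b hb ->] ->]]]].
exists (muln a n2.+1 + b).
  apply: (@leq_trans (muln a.+1 n2.+1)); first by rewrite mulSn addnC ltn_add2r ltnS ltnW.
  by rewrite leq_mul2r ha orbT.
by rewrite divnMDl // modnMDl divn_small ?addn0 ?modn_small // ltnS ltnW.
Qed.

Lemma fin1 (x0 : G) : finite_set (fun x => x = x0).
Proof. by exists 1, (fun _ => x0) => x ->; exists 0. Qed.

Lemma fin_img N (g : nat -> G) :
  finite_set (fun x => exists2 i, i < N & x = g i).
Proof. by exists N, g. Qed.

Lemma fin_bigU N (X : nat -> G -> Prop) : (forall j, j < N -> finite_set (X j)) ->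
  finite_set (fun x => exists2 j, j < N & X j x).
Proof.
elim: N => [|N IH] h.
  by apply: fin0 => x [].
apply: (@fin_sub _ (fun x => (exists2 j, j < N & X j x) \/ X N x)).
  apply: finU; last exact: h.
  by apply: IH => j hj; apply: h; apply: ltnW.
move=> x [j]; rewrite ltnS leq_eqVlt => /orP [/eqP ->|hj] hx; first by right.
by left; exists j.
Qed.

Lemma gprod_ext (f g : nat -> G) m : (forall i, i < m -> f i = g i) -> gprod f m = gprod g m.
Proof.
elim: m => [|m IH] h //=.
by rewrite IH ?h // => i hi; apply: h; apply: ltnW.
Qed.

Lemma gprod1 m : gprod (fun _ => e) m = e.
Proof. by elim: m => //= m ->; rewrite gmul1. Qed.

Lemma gprod_delta m i (y : G) : i < m -> gprod (fun j => if j == i then y else e) m = y.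
Proof.
elim: m => [|m IH] //=; rewrite ltnS leq_eqVlt => /orP [/eqP ->|hi].
  rewrite eqxx (@gprod_ext _ (fun _ => e)) ?gprod1 ?gmul1 // => j hj.
  by rewrite (ltn_eqF hj).
by rewrite IH // (gtn_eqF hi) Gmulg1.
Qed.

Lemma gprod_in (H : G -> Prop) (f : nat -> G) m : subgroup H ->
  (forall i, i < m -> H (f i)) -> H (gprod f m).
Proof.
move=> sH; elim: m => [|m IH] h /=; first exact: subgroup1.
apply: subgroupM => //; last exact: h.
by apply: IH => i hi; apply: h; apply: ltnW.
Qed.

Variables (A : G -> Prop).
Hypotheses (sA : subgroup A) (abA : abelian A).

Lemma gprod_gexp (f : nat -> G) m n : (forall i, i < m -> A (f i)) ->
  gexp (gprod f m) n = gprod (fun i => gexp (f i) n) m.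
Proof.
elim: m => [|m IH] h /=; first exact: gexp1g.
rewrite gexpMn; first by rewrite IH // => i hi; apply: h; apply: ltnW.
apply: abA; last exact: h.
by apply: gprod_in => // i hi; apply: h; apply: ltnW.
Qed.

Lemma quasi_tors (P : G -> Prop) n : 0 < n -> quasicyclic P ->
  finite_set (fun y => P y /\ gexp y n = e).
Proof.
move=> n0 [q [x [qpr [x0 [x1 [xS xP]]]]]].
have q0 : 0 < q by apply: prime_gt0.
have xdown : forall a l, gexp (x (l + a)) (q ^ l) = x a.
  move=> a; elim=> [|l IH]; first by rewrite add0n expn0 gexp1.
  by rewrite addSn expnS gexpM xS IH.
have xord : forall j, gexp (x j) (q ^ j) = e.
  by move=> j; rewrite -[X in x X]addn0 xdown x0.
have xne : forall j, 0 < j -> x j <> e.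
  move=> j j0 hj; apply: x1; rewrite -(xdown 1 j.-1) addn1 prednK // hj gexp1g //.
have gcdX : forall (y : G) a b, gexp y a = e -> gexp y b = e -> gexp y (gcdn a b) = e.
  move=> y a b ha hb; case: (posnP a) => [->|a0]; first by rewrite gcd0n.
  have [c _ /dvdnP [k hk]] := Bezoutl b a0.
  have : gexp y (gcdn a b + muln c b) = e by rewrite hk mulnC gexpM ha gexp1g.
  by rewrite gexpD mulnC gexpM hb gexp1g Gmulg1.
have ordx : forall j m, gexp (x j) m = e -> q ^ j %| m.
  move=> j m hm.
  have := gcdX _ _ _ hm (xord j).
  have : gcdn m (q ^ j) %| q ^ j by apply: dvdn_gcdr.
  case/(dvdn_pfactor _ _ qpr) => i hij hgi; rewrite hgi => hi.
  case: (ltnP i j) => [ij|ji].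
    exfalso; apply: (xne (j - i)); first by rewrite subn_gt0.
    by rewrite -(xdown (j - i) i) (subnKC (ltnW ij)).
  have -> : j = i by apply/eqP; rewrite eqn_leq hij ji.
  rewrite -hgi; exact: dvdn_gcdl.
set a := logn q n.
apply: (@fin_sub _ (fun y => exists2 t, t < q ^ a & y = gexp (x a) t)); first exact: fin_img.
move=> y [/xP [j [k ->]] hy].
have hjk : q ^ j %| muln k n by apply: ordx; rewrite gexpM.
case: (posnP k) => [->|k0].
  by exists 0; rewrite ?expn_gt0 ?q0.
have yeq : exists t, gexp (x j) k = gexp (x a) t.
  case: (leqP j a) => [ja|aj].
    by exists (muln (q ^ (a - j)) k); rewrite gexpM -(xdown j (a - j)) subnK.
  move: hjk; rewrite pfactor_dvdn ?muln_gt0 ?k0 // lognM // -/a => hjk.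
  have : q ^ (j - a) %| k by rewrite pfactor_dvdn // leq_subLR addnC.
  case/dvdnP => t ht; exists t.
  by rewrite ht mulnC gexpM -{1}(subnKC (ltnW aj)) addnC xdown.
case: yeq => t ->.
exists (t %% q ^ a); first by rewrite ltn_mod expn_gt0 q0.
by rewrite {1}(divn_eq t (q ^ a)) gexpD mulnC gexpM xord gexp1g gmul1.
Qed.


Lemma cher_tors (D : G -> Prop) n : 0 < n -> sub_set D A -> chernikov D ->
  finite_set (fun x => D x /\ gexp x n = e).
Proof.
move=> n0 DA [sD [K [sK [KD [_ [[N [u [uD hu]]] [m [P [Pq [Psub [Pcom [PK Puniq]]]]]]]]]]]].
have PKs : forall i y, i < m -> P i y -> K y.
  move=> i y im hy; apply/PK; exists (fun j => if j == i then y else e); split.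
    by move=> j jm; case: eqP => [->//|_]; exact: subgroup1 (Psub j jm).
  by rewrite gprod_delta.
have AK : forall y, K y -> A y by move=> y /KD /DA.
have KT : finite_set (fun k => K k /\ gexp k n = e).
  apply: (@fin_sub _ (fun k => exists f, (forall i, i < m -> P i (f i) /\ gexp (f i) n = e) /\ k = gprod f m)).
    have gen : forall m', m' <= m -> finite_set (fun k => exists f, (forall i, i < m' -> P i (f i) /\ gexp (f i) n = e) /\ k = gprod f m').
      elim=> [|m' IH] hm'.
        apply: (@fin_sub _ (fun x => x = e)); first exact: fin1.
        by move=> k [f [_ ->]].
      apply: (@fin_sub _ (fun z => exists x y, (exists f, (forall i, i < m' -> P i (f i) /\ gexp (f i) n = e) /\ x = gprod f m') /\ (P m' y /\ gexp y n = e) /\ z = x * y)).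
        apply: fin2; first by apply: IH; apply: ltnW.
        by apply: quasi_tors => //; apply: Pq.
      move=> k [f [hf ->]]; exists (gprod f m'), (f m'); split.
        by exists f; split => // i hi; apply: hf; apply: ltnW.
      by split => //; apply: hf.
    exact: gen.
  move=> k [Kk hk]; have [f [hf kf]] := (PK k).1 Kk.
  exists f; split => //.
  have Af : forall i, i < m -> A (f i) by move=> i hi; apply: AK; apply: (PKs i) => //; apply: hf.
  have := Puniq (fun i => gexp (f i) n) (fun _ => e).
  have h1 : forall i, i < m -> P i (gexp (f i) n) by move=> i hi; apply: subgroupX; [apply: Psub|apply: hf].
  have h2 : forall i, i < m -> P i e by move=> i hi; apply: subgroup1; apply: Psub.
  move=> /(_ h1 h2) h3 i hi; split; first exact: hf.
  by apply: h3 => //; rewrite gprod1 -gprod_gexp // -kf hk.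
apply: (@fin_sub _ (fun x => exists2 j, j < N & (D x /\ gexp x n = e /\ K (inv (u j) * x)))).
  apply: fin_bigU => j hj.
  case: (classic (exists x0, D x0 /\ gexp x0 n = e /\ K (inv (u j) * x0))) => [[x0 [Dx0 [hx0 Kx0]]]|hne]; last first.
    by apply: fin0 => x hx; apply: hne; exists x.
  apply: (@fin_sub _ (fun z => exists x y, x = x0 /\ (K y /\ gexp y n = e) /\ z = x * y)).
    by apply: fin2 => //; exact: fin1.
  move=> x [Dx [hx Kx]]; exists x0, (inv x0 * x); split => //; split; last by rewrite GmulKVg.
  split.
    have -> : inv x0 * x = inv (inv (u j) * x0) * (inv (u j) * x).
      by rewrite GinvMg GinvgK -gmulA GmulKVg.
    by apply: subgroupM => //; exact: subgroupV.
  rewrite gexpMn ?gexpV ?hx0 ?hx ?Ginv1 ?gmul1 //.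
  by apply: abA; [apply: subgroupV => //|]; apply: DA.
move=> x [Dx hx]; have [j hj Kj] := hu x Dx; by exists j.
Qed.

End Fin.


Section Perm.
Variables (G : Grp) (A : G -> Prop).
Local Notation "x * y" := (@gmul G x y).
Local Notation e := (@gone G).
Local Notation inv := (@ginv G).
Hypotheses (sA : subgroup A) (abA : abelian A).

Definition AT := {x : G | A x}.
Definition amul (x y : AT) : AT :=
  exist _ (sval x * sval y) (subgroupM sA (svalP x) (svalP y)).
Definition aone : AT := exist _ e (subgroup1 sA).

Lemma AT_eq (x y : AT) : sval x = sval y -> x = y.
Proof. by case: x => x hx; case: y => y hy /= hxy; subst y; rewrite (proof_irrelevance _ hx hy). Qed.

Lemma amulA : associative amul.
Proof. by move=> x y z; apply: AT_eq; rewrite /= gmulA. Qed.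
Lemma amulC : commutative amul.
Proof. by move=> x y; apply: AT_eq; rewrite /=; apply: abA; apply: svalP. Qed.
Lemma amul1 : left_id aone amul.
Proof. by move=> x; apply: AT_eq; rewrite /= gmul1. Qed.

HB.instance Definition _ := Monoid.isComLaw.Build AT aone amul amulA amulC amul1.

Lemma gprod_big (f : nat -> G) (hf : forall i, A (f i)) n :
  gprod f n = sval (\big[amul/aone]_(i < n) (exist _ (f i) (hf i) : AT)).
Proof.
elim: n => [|n IH]; first by rewrite big_ord0.
by rewrite big_ord_recr /= IH.
Qed.

Lemma gprod_perm (f : nat -> G) (s : nat -> nat) n : (forall i, A (f i)) ->
  (forall i, i < n -> s i < n) ->
  (forall i j, i < n -> j < n -> s i = s j -> i = j) ->
  gprod (fun i => f (s i)) n = gprod f n.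
Proof.
move=> hf sn sinj.
rewrite (gprod_big (f := fun i => f (s i)) (fun i => hf (s i))) (gprod_big hf).
congr sval.
pose h := fun i : 'I_n => Ordinal (sn i (ltn_ord i)).
have hinj : injective h.
  by move=> i j /(congr1 val) /= /(sinj _ _ (ltn_ord i) (ltn_ord j)) /val_inj.
rewrite [RHS](reindex_inj hinj) /=.
apply: eq_bigr => i _; exact: AT_eq.
Qed.

End Perm.


Section Dedup.
Variables (G : Grp) (C : G -> Prop).
Local Notation "x * y" := (@gmul G x y).
Local Notation e := (@gone G).
Local Notation inv := (@ginv G).
Hypothesis sC : subgroup C.

Definition gcover n (t : nat -> G) := forall h, exists2 i, i < n & C (inv (t i) * h).
Definition gdistinct n (t : nat -> G) :=
  forall i j, i < n -> j < n -> C (inv (t i) * t j) -> i = j.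

Lemma dedup n t : gcover n t -> exists n' t', gcover n' t' /\ gdistinct n' t'.
Proof.
elim: n t => [|n IH] t hc.
  by have [i] := hc e.
case: (classic (gdistinct n.+1 t)) => hd; first by exists n.+1, t.
have [i [j [hi [hj [Cij nij]]]]] : exists i j, i < n.+1 /\ j < n.+1 /\
    C (inv (t i) * t j) /\ i <> j.
  apply: NNPP => hn; apply: hd => i j hi hj Cij; apply: NNPP => nij.
  by apply: hn; exists i, j.
pose t' := fun k => if k < j then t k else t k.+1.
have idx : forall k, k < n.+1 -> k <> j -> exists2 k', k' < n & t' k' = t k.
  move=> k hk nkj; case: (ltnP k j) => [kj|jk].
    by exists k; [apply: leq_trans kj _; rewrite -ltnS|rewrite /t' kj].
  have jk' : j < k by rewrite ltn_neqAle jk andbT; apply/eqP => h; apply: nkj.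
  exists k.-1; first by rewrite -ltnS prednK // (leq_ltn_trans _ jk').
  by rewrite /t' ltnNge -ltnS prednK ?(leq_ltn_trans _ jk') //= jk'.
apply: (IH t') => h.
have [k hk Ck] := hc h.
case: (classic (k = j)) => [kj|nkj].
  subst k; have [k' hk' ek] := idx i hi nij; exists k' => //; rewrite ek.
  have -> : inv (t i) * h = (inv (t i) * t j) * (inv (t j) * h).
    by rewrite -gmulA GmulKVg.
  exact: subgroupM.
by have [k' hk' ek] := idx k hk nkj; exists k' => //; rewrite ek.
Qed.

End Dedup.


Section Main.
Variables (G : Grp) (A D : G -> Prop) (rho : G -> G) (n : nat) (t : nat -> G).
Local Notation "x * y" := (@gmul G x y).
Local Notation e := (@gone G).
Local Notation inv := (@ginv G).
Local Notation C := (centralizer A).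
Hypotheses (sA : subgroup A) (abA : abelian A) (nA : normal A)
  (sD : subgroup D) (DA : sub_set D A) (nD : normal D) (divD : divisible D)
  (rhoD : forall a, A a -> D (rho a))
  (rhoM : forall a b, A a -> A b -> rho (a * b) = rho a * rho b)
  (rhoid : forall d, D d -> rho d = d)
  (n0 : 0 < n) (cov : gcover C n t) (dis : gdistinct C n t).

Definition cj (g x : G) := inv g * (x * g).

Lemma cjM g x y : cj g (x * y) = cj g x * cj g y.
Proof. by rewrite /cj -!gmulA GmulKVg. Qed.

Lemma cj_comp g h x : cj h (cj g x) = cj (g * h) x.
Proof. by rewrite /cj GinvMg !gmulA. Qed.

Lemma cjK g x : cj (inv g) (cj g x) = x.
Proof. by rewrite cj_comp GmulgV /cj Ginv1 gmul1 Gmulg1. Qed.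

Lemma cj1 g : cj g e = e.
Proof. by rewrite /cj gmul1 gmulV. Qed.

Lemma normal_cj (H : G -> Prop) g x : normal H -> H x -> H (cj g x).
Proof. by move=> nH; apply: nH. Qed.

Lemma Ccj c y : C c -> A y -> cj c y = y.
Proof. by move=> Cc Ay; rewrite /cj -(Cc y Ay) GmulKg. Qed.

Lemma Ccj' c y : C c -> A y -> cj (inv c) y = y.
Proof. by move=> Cc Ay; rewrite /cj GinvgK gmulA (Cc y Ay) GmulgK. Qed.

Definition rg g a := cj (inv g) (rho (cj g a)).

Lemma rgD g a : A a -> D (rg g a).
Proof. by move=> Aa; apply: nD; apply: rhoD; apply: nA. Qed.

Lemma rgA g a : A a -> A (rg g a).
Proof. by move=> Aa; apply: DA; apply: rgD. Qed.

Lemma rgM g a b : A a -> A b -> rg g (a * b) = rg g a * rg g b.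
Proof. by move=> Aa Ab; rewrite /rg cjM rhoM ?cjM //; apply: nA. Qed.

Lemma rgid g d : D d -> rg g d = d.
Proof. by move=> Dd; rewrite /rg rhoid ?cjK //; apply: nD. Qed.

Lemma rgC g c a : C c -> A a -> rg (g * c) a = rg g a.
Proof.
move=> Cc Aa; have Acj : A (cj g a) by apply: nA.
rewrite /rg -cj_comp (Ccj Cc Acj).
have Ar : A (rho (cj g a)) by apply: DA; apply: rhoD.
by rewrite GinvMg -cj_comp (Ccj' Cc Ar).
Qed.

Lemma rg_cj g h a : rg g (cj h a) = cj h (rg (h * g) a).
Proof.
by rewrite /rg cj_comp cj_comp GinvMg -gmulA gmulV Gmulg1.
Qed.

Definition r a := gprod (fun i => rg (t i) a) n.

Lemma rD a : A a -> D (r a).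
Proof. by move=> Aa; apply: gprod_in => // i _; apply: rgD. Qed.

Lemma gprod_mul (f g : nat -> G) m : (forall i, A (f i)) -> (forall i, A (g i)) ->
  gprod (fun i => f i * g i) m = gprod f m * gprod g m.
Proof.
move=> hf hg; elim: m => [|m IH] /=; first by rewrite gmul1.
rewrite IH -!gmulA; congr (_ * _); rewrite !gmulA; congr (_ * _).
apply: abA => //.
by apply: gprod_in => // i _.
Qed.

Lemma gprod_cj h (f : nat -> G) m : gprod (fun i => cj h (f i)) m = cj h (gprod f m).
Proof. by elim: m => [|m IH] /=; [rewrite cj1|rewrite IH cjM]. Qed.

Lemma gprod_const (x : G) m : gprod (fun _ => x) m = gexp x m.
Proof. by elim: m => //= m ->. Qed.

Lemma rM a b : A a -> A b -> r (a * b) = r a * r b.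
Proof.
move=> Aa Ab; rewrite /r -gprod_mul; last by move=> i; apply: rgA.
  by apply: gprod_ext => i _; apply: rgM.
by move=> i; apply: rgA.
Qed.

Lemma rid d : D d -> r d = gexp d n.
Proof. by move=> Dd; rewrite /r -gprod_const; apply: gprod_ext => i _; apply: rgid. Qed.

Lemma re : r e = e.
Proof. by rewrite rid ?gexp1g //; apply: subgroup1. Qed.

Lemma rV a : A a -> r (inv a) = inv (r a).
Proof.
move=> Aa; apply: Ginv_uniq; rewrite -rM ?GmulgV ?re //; exact: subgroupV.
Qed.

Lemma sC : subgroup C.
Proof.
split; [|split].
- by move=> a _; rewrite gmul1 Gmulg1.
- by move=> x y hx hy a Aa; rewrite -gmulA hy // !gmulA hx.
- move=> x hx a Aa; apply: (@Gmulg_cancl _ x); rewrite GmulKVg gmulA hx //.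
  by rewrite -gmulA GmulgV Gmulg1.
Qed.

Lemma r_cj h a : A a -> r (cj h a) = cj h (r a).
Proof.
move=> Aa; rewrite /r (gprod_ext (g := fun i => cj h (rg (h * t i) a))); last first.
  by move=> i _; apply: rg_cj.
rewrite gprod_cj; congr (cj h _).
have hc : forall i, exists j, j < n /\ C (inv (t j) * (h * t i)).
  by move=> i; have [j hj Cj] := cov (h * t i); exists j.
pose s := fun i => proj1_sig (cid (hc i)).
have hs : forall i, s i < n /\ C (inv (t (s i)) * (h * t i)).
  by move=> i; rewrite /s; case: (cid (hc i)).
rewrite (gprod_ext (g := fun i => rg (t (s i)) a)); last first.
  move=> i _; have [_ Cs] := hs i.
  by rewrite -{1}(GmulKVg (t (s i)) (h * t i)) rgC.
apply: (gprod_perm (A := A)) => //.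
- by move=> i; apply: rgA.
- by move=> i _; case: (hs i).
- move=> i j hi hj sij; apply: dis => //.
  have [_ Ci] := hs i; have [_ Cj] := hs j.
  have -> : inv (t i) * t j = inv (inv (t (s i)) * (h * t i)) * (inv (t (s j)) * (h * t j)).
    by rewrite sij !GinvMg GinvgK -!gmulA GmulKVg GmulKg.
  exact: (subgroupM sC (subgroupV sC Ci) Cj).
Qed.

Lemma main_S : exists S : G -> Prop,
    subgroup S /\ sub_set S A /\ normal S /\
    (forall a, A a <-> exists s d, S s /\ D d /\ a = gmul s d) /\
    (forall x, S x -> D x -> gexp x n = e).
Proof.
exists (fun a => A a /\ r a = e); split; [|split; [|split; [|split]]].
- split; [|split].
  + by split; [apply: subgroup1|apply: re].
  + by move=> x y [Ax rx] [Ay ry]; split; [apply: subgroupM|rewrite rM // rx ry gmul1].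
  + by move=> x [Ax rx]; split; [apply: subgroupV|rewrite rV // rx Ginv1].
- by move=> x [].
- by move=> g x [Ax rx]; split; [apply: nA|rewrite (r_cj g Ax) rx cj1].
- move=> a; split => [Aa|[s [d [[As _] [Dd ->]]]]]; last first.
    by apply: subgroupM => //; apply: DA.
  have [d0 Dd0 hd0] := divD (rD Aa) n0.
  exists (a * inv d0), d0; split; last by split => //; rewrite GmulgKV.
  have Ad0 : A d0 by apply: DA.
  split; first by apply: subgroupM => //; apply: subgroupV.
  have Aid0 : A (inv d0) by apply: subgroupV.
  by rewrite (rM Aa Aid0) (rV Ad0) (rid Dd0) hd0 GmulgV.
- by move=> x [Ax rx] Dx; rewrite -rid.
Qed.

End Main.


Unset Implicit Arguments.
Set Strict Implicit.
Set Printing Implicit Defensive.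

Theorem lemma2p5 (p : nat) (G : Grp) (A D : G -> Prop) :
  prime p -> p_group G p ->
  subgroup A -> normal A -> abelian A ->
  finite_index_in (centralizer A) (fun _ => True) ->
  subgroup D -> sub_set D A -> normal D -> divisible D -> chernikov D ->
  exists S : G -> Prop,
    subgroup S /\ sub_set S A /\ normal S /\
    (forall a, A a <-> exists s d, S s /\ D d /\ a = gmul s d) /\
    finite_set (fun x => S x /\ D x).
Proof.
move=> pr pg sA nA abA [N [u [_ hu]]] sD DA nD divD chD.
have sCA : subgroup (centralizer A) by apply: sC.
have [n [t [cov dis]]] : exists n t, gcover (centralizer A) n t /\ gdistinct (centralizer A) n t.
  by apply: (dedup sCA (n := N) (t := u)) => h; apply: hu.
have n0 : 0 < n by have [i hi _] := cov (gone G); apply: leq_ltn_trans hi.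
have [S0 [sS0 [S0A [S0D S0span]]]] := exists_compl pr pg sA abA sD DA divD.
have hr : forall a, exists d, A a -> D d /\ exists s, S0 s /\ a = gmul s d.
  move=> a; case: (classic (A a)) => Aa; last by exists (gone G).
  by have [s [d [hs [hd ->]]]] := S0span a Aa; exists d => _; split => //; exists s.
pose rho a := proj1_sig (cid (hr a)).
have hrho : forall a, A a -> D (rho a) /\ exists s, S0 s /\ a = gmul s (rho a).
  by move=> a; rewrite /rho; case: (cid (hr a)).
have uniq : forall s d s' d', S0 s -> D d -> S0 s' -> D d' -> gmul s d = gmul s' d' -> d = d'.
  move=> s d s' d' hs hd hs' hd' heq.
  have h1 : gmul (ginv s') s = gmul d' (ginv d).
    by rewrite -(GmulgK d s) heq gmulA GmulKg.
  have h2 : gmul d' (ginv d) = gone G.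
    rewrite -h1; apply: S0D; first by apply: subgroupM => //; apply: subgroupV.
    by rewrite h1; apply: subgroupM => //; apply: subgroupV.
  by rewrite -(GinvgK d) (Ginv_uniq h2) GinvgK.
have rhoD : forall a, A a -> D (rho a) by move=> a /hrho [].
have rhoM : forall a b, A a -> A b -> rho (gmul a b) = gmul (rho a) (rho b).
  move=> a b Aa Ab.
  have [Da [s [hs ea]]] := hrho a Aa; have [Db [s' [hs' eb]]] := hrho b Ab.
  have Aab : A (gmul a b) by apply: subgroupM.
  have [Dab [s'' [hs'' eab]]] := hrho _ Aab.
  symmetry; apply: (uniq (gmul s s') _ s'') => //.
  - exact: subgroupM.
  - exact: subgroupM.
  rewrite -eab [in RHS]ea [in RHS]eb -!gmulA; congr (gmul s _); rewrite !gmulA; congr (gmul _ _).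
  by apply: abA; [apply: S0A|apply: DA].
have rhoid : forall d, D d -> rho d = d.
  move=> d Dd; have [Dr [s [hs ed]]] := hrho d (DA _ Dd).
  symmetry; apply: (uniq (gone G) _ s) => //; first exact: subgroup1.
  by rewrite gmul1 -ed.
have [S [sS [SA [nS [span tors]]]]] :=
  main_S sA abA nA sD DA nD divD rhoD rhoM rhoid n0 cov dis.
exists S; split => //; split => //; split => //; split => //.
apply: (fin_sub (cher_tors sA abA n0 DA chD)).
by move=> x [Sx Dx]; split => //; apply: tors.
Qed.
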